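(* Let $n\ge1$. Every $1$-almost-increasing permutation $\pi\in S_n$ can be written as $\pi=x_n\circ x_{n-1}\circ\cdots\circ x_1(e_0)$ for exactly one word $x_n\cdots x_1$ of length $n$ over the alphabet $\{\rho_{1,1},\rho_{1,2},\rho_{2,1},\rho_{2,2}\}$ such that $x_1=\rho_{1,1}$ and the word contains neither $\rho_{2,1}\rho_{1,1}$ nor $\rho_{2,2}\rho_{1,1}$ as a substring of consecutive letters.
   Context: A permutation $\pi\in S_n$ (one-line form) is $1$-almost-increasing if for every $i$ there is at most one $j\le i$ with $\pi_j>i$; equivalently, it avoids $4321,4312,3421,3412$. $e_0$ is the empty permutation. For $\pi\in S_m$ and $1\le i,j\le m+1$, $\rho_{i,j}(\pi)\in S_{m+1}$ is obtained by increasing by $1$ every entry of $\pi$ that is $\ge i$ and inserting the value $i$ at position $j$; in particular $\rho_{1,1}(e_0)=[1]$. A word $x_n\cdots x_1$ denotes the composition with the rightmost letter $x_1$ applied first. *)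

(* Defs.v *)
From mathcomp Require Import all_boot.
Set Implicit Arguments. Unset Strict Implicit. Unset Printing Implicit Defensive.

(* Permutations of {1,..,n} in one-line notation: s = [:: pi_1; ...; pi_n]. *)
Definition is_perm (n : nat) (s : seq nat) : Prop := perm_eq s (iota 1 n).

Definition almost_inc1 (s : seq nat) : Prop :=
  forall i, 1 <= i <= size s -> count (fun v => i < v) (take i s) <= 1.

(* rho_{i,j}: increase every entry >= i by 1, then insert value i at (1-based) position j. *)
Definition rho (i j : nat) (s : seq nat) : seq nat :=
  let s' := map (fun v => if i <= v then v.+1 else v) s in
  take j.-1 s' ++ i :: drop j.-1 s'.

Inductive letter := R11 | R12 | R21 | R22.

Definition letter_op (x : letter) : seq nat -> seq nat :=
  match x with
  | R11 => rho 1 1 | R12 => rho 1 2 | R21 => rho 2 1 | R22 => rho 2 2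
  end.

(* A word x_n ... x_1 is represented by the list [:: x_n; ...; x_1] (written order);
   its evaluation on the empty permutation e_0 is x_n (... (x_1 e_0)). *)
Definition eval_word (w : seq letter) : seq nat := foldr letter_op [::] w.

Definition has_factor (u w : seq letter) : Prop := exists p q, w = p ++ u ++ q.

(* Main.v *)
Require Import Defs.
From mathcomp Require Import all_boot.
From mathcomp Require Import zify.
Set Implicit Arguments. Unset Strict Implicit. Unset Printing Implicit Defensive.

Definition bmp (i v : nat) := if i <= v then v.+1 else v.
Definition dec (i v : nat) := if i < v then v.-1 else v.

Lemma rho1 i s : rho i 1 s = i :: map (bmp i) s.
Proof. by rewrite /rho /= take0 drop0. Qed.

Lemma rho2 i d s : rho i 2 (d :: s) = bmp i d :: i :: map (bmp i) s.
Proof. by rewrite /rho /= take0 drop0. Qed.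

Lemma op11 s : letter_op R11 s = 1 :: map (bmp 1) s. Proof. exact: rho1. Qed.
Lemma op21 s : letter_op R21 s = 2 :: map (bmp 2) s. Proof. exact: rho1. Qed.
Lemma op12 d s : letter_op R12 (d :: s) = bmp 1 d :: 1 :: map (bmp 1) s.
Proof. exact: rho2. Qed.
Lemma op22 d s : letter_op R22 (d :: s) = bmp 2 d :: 2 :: map (bmp 2) s.
Proof. exact: rho2. Qed.

Lemma bmp_inj i : injective (bmp i).
Proof. move=> u v; rewrite /bmp; case: ifP; case: ifP; lia. Qed.

Lemma bmp_dec i s : i \notin s -> map (bmp i) (map (dec i) s) = s.
Proof.
elim: s => //= v s IH; rewrite inE negb_or => /andP[hv hs]; rewrite IH //.
congr (_ :: _); move/eqP: hv => hv; rewrite /bmp /dec.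
case: (ltnP i v) => h1; case: ifP; lia.
Qed.

Lemma size_letter x s : size (letter_op x s) = (size s).+1.
Proof.
by case: x; rewrite /= /rho size_cat /= addnS -size_cat cat_take_drop size_map.
Qed.

Lemma size_eval w : size (eval_word w) = size w.
Proof. by elim: w => //= x w IH; rewrite size_letter IH. Qed.

Definition valid w := [/\ last R22 w = R11, ~ has_factor [:: R21; R11] w
                          & ~ has_factor [:: R22; R11] w].

Lemma hf_nil a b : ~ has_factor [:: a; b] [::].
Proof. by move=> [p [q]]; case: p. Qed.

Lemma hf_cons a b x w :
  has_factor [:: a; b] (x :: w) <-> (x = a /\ ohead w = Some b) \/ has_factor [:: a; b] w.
Proof.
split.
- move=> [[|y p] [q]] /=.
  + by case=> -> ->; left.
  + by case=> _ ->; right; exists p, q.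
- case.
  + case=> ->; case: w => //= y w [->]; by exists [::], w.
  + move=> [p [q] ->]; by exists (x :: p), q.
Qed.

Lemma valid_tail x y t : valid (x :: y :: t) -> valid (y :: t).
Proof.
case=> h1 h2 h3; split => //.
- by move=> H; apply: h2; apply/hf_cons; right.
- by move=> H; apply: h3; apply/hf_cons; right.
Qed.

Lemma valid_head x y t : valid (x :: y :: t) -> y = R11 -> x = R11 \/ x = R12.
Proof.
case=> _ h2 h3 hy; subst y; case: x h2 h3 => h2 h3; auto.
- by exfalso; apply: h2; apply/hf_cons; left.
- by exfalso; apply: h3; apply/hf_cons; left.
Qed.

Lemma eval_nonempty x t : exists d s, eval_word (x :: t) = d :: s.
Proof.
have := size_eval (x :: t); case: (eval_word (x :: t)) => // d s _; by exists d, s.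
Qed.

Lemma head_lemma t : valid t -> (head 0 (eval_word t) = 1 <-> head R22 t = R11).
Proof.
elim: t => [|x t IH]; first by case.
case: t IH => [|y t] IH hv.
  by case: hv => /= ->.
have IH' := IH (valid_tail hv).
have [d [s e]] := eval_nonempty y t.
change (eval_word (x :: y :: t)) with (letter_op x (eval_word (y :: t))).
rewrite e in IH' *; rewrite /=.
case: x hv => hv /=; try by [].
- by split => // H; exfalso; move: H; case: ifP; lia.
- split => // H; exfalso.
  have hd : d <> 1.
    move=> hd; move: IH' => /= [] /(_ hd) hy _.
    by have [] := valid_head hv hy.
  move: H; case: ifP; lia.
Qed.

Definition cls (p : seq nat) :=
  match p with
  | a :: c :: _ => if a == 1 then R11 else if c == 1 then R12
                   else if a == 2 then R21 else R22
  | _ => R11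
  end.

Lemma cls_lemma x y t : valid (x :: y :: t) -> cls (eval_word (x :: y :: t)) = x.
Proof.
move=> hv.
have hl := head_lemma (valid_tail hv).
have [d [s e]] := eval_nonempty y t.
change (eval_word (x :: y :: t)) with (letter_op x (eval_word (y :: t))).
rewrite e in hl *; move: hl => /= hl.
have hd : x = R21 \/ x = R22 -> d <> 1.
  move=> hx hd; have hy := (proj1 hl hd).
  by case: (valid_head hv hy) => ex; rewrite ex in hx; case: hx.
case: x hv hd => hv hd /=; case: d e hl hd => [|[|d]] e hl hd //=. all: try (exfalso; by [apply: (hd (or_introl erefl)) | apply: (hd (or_intror erefl))]). all: by rewrite take0 drop0.

Qed.

Lemma letter_inj x d s d' s' : letter_op x (d :: s) = letter_op x (d' :: s') -> d :: s = d' :: s'.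
Proof.
case: x; rewrite /letter_op ?rho1 ?rho2 /=.
- by case=> /bmp_inj -> /(inj_map (@bmp_inj 1)) ->.
- by case=> /bmp_inj -> /(inj_map (@bmp_inj 1)) ->.
- by case=> /bmp_inj -> /(inj_map (@bmp_inj 2)) ->.
- by case=> /bmp_inj -> /(inj_map (@bmp_inj 2)) ->.
Qed.

Lemma uniq_word w1 w2 : valid w1 -> valid w2 -> eval_word w1 = eval_word w2 -> w1 = w2.
Proof.
elim: w1 w2 => [|x1 t1 IH] w2; first by case.
case: w2 => [|x2 t2] v1 v2; first by case: v2.
move=> e.
have hs : size t1 = size t2.
  by have := f_equal size e; rewrite !size_eval; case.
case: t1 IH v1 e hs => [|y1 t1] IH v1 e hs.
  case: t2 v2 e hs => // v2 e _; case: v1 => /= -> _ _; by case: v2 => /= ->.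
case: t2 v2 e hs => // y2 t2 v2 e hs.
have hx : x1 = x2 by rewrite -(cls_lemma v1) -(cls_lemma v2) e.
subst x2.
have [d [s es]] := eval_nonempty y1 t1.
have [d' [s' es']] := eval_nonempty y2 t2.
have e' : eval_word (y1 :: t1) = eval_word (y2 :: t2).
  rewrite es es'; apply: (@letter_inj x1).
  by rewrite -es -es'.
by rewrite (IH _ (valid_tail v1) (valid_tail v2) e').
Qed.

Lemma is_permP n s : is_perm n s <-> [/\ uniq s, size s = n & forall v, v \in s -> 0 < v <= n].
Proof.
split.
- move=> hp; split.
  + by rewrite (perm_uniq hp) iota_uniq.
  + by rewrite (perm_size hp) size_iota.
  + by move=> v; rewrite (perm_mem hp) mem_iota; lia.
- case=> hu hs hv; apply: uniq_perm => //; first exact: iota_uniq.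
  have [] := @uniq_min_size _ s (iota 1 n) hu.
  + by move=> v /hv; rewrite mem_iota; lia.
  + by rewrite size_iota hs.
  by [].
Qed.

Lemma dec_perm n i s : 1 <= i <= 2 -> 1 <= n -> uniq s -> i \notin s -> size s = n ->
  (forall v, v \in s -> 0 < v <= n.+1) -> is_perm n (map (dec i) s).
Proof.
move=> hi hn hu his hs hv; apply/is_permP; split.
- rewrite map_inj_in_uniq // => u v hu' hv'.
  have: u != i by apply: contraNneq his => <-.
  have: v != i by apply: contraNneq his => <-.
  rewrite /dec; case: ifP; case: ifP; lia.
- by rewrite size_map.
- move=> v /mapP [u hu' ->]; have := hv u hu'.
  have: u != i by apply: contraNneq his => <-.
  rewrite /dec; case: ifP; lia.
Qed.

Lemma dec_count i k s : 1 <= i <= 2 -> 1 <= k -> i \notin s ->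
  count (fun v => k < v) (map (dec i) s) = count (fun v => k.+1 < v) s.
Proof.
move=> hi hk his; rewrite count_map; apply: eq_in_count => v hv /=.
have: v != i by apply: contraNneq his => <-.
rewrite /dec; case: ifP; lia.
Qed.

Lemma ai_case1 i s : 1 <= i <= 2 -> i \notin s -> almost_inc1 (i :: s) ->
  almost_inc1 (map (dec i) s).
Proof.
move=> hi his ha k; rewrite size_map => hk.
rewrite -map_take dec_count //; last first.
  by apply: contra his; apply: mem_take. lia.
have := ha k.+1; rewrite /= => H.
have : k.+1 < i = false by lia.
move=> e; move: H; rewrite e /=; apply; lia.
Qed.

Lemma ai_case2 i a s : 1 <= i <= 2 -> i \notin a :: s -> almost_inc1 (a :: i :: s) ->
  almost_inc1 (map (dec i) (a :: s)).
Proof.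
move=> hi his ha k; rewrite size_map => hk.
rewrite -map_take dec_count //; last first.
  by apply: contra his; apply: mem_take. lia.
case: k hk => [|k] hk; first by [].
have := ha k.+2; rewrite /= => H.
have : k.+2 < i = false by lia.
move=> e; move: H; rewrite e /=; apply; move: hk => /=; lia.
Qed.

Lemma exist_word n : forall p, 1 <= n -> is_perm n p -> almost_inc1 p ->
  exists w, [/\ size w = n, valid w & eval_word w = p].
Proof.
elim: n => [|n IH] p // _ hp ha.
case: n IH hp ha => [|n] IH hp ha.
  move/is_permP: hp => [hu hs hv].
  case: p hu hs hv ha => [|v [|]] // _ _ hv _.
  have := hv v; rewrite inE eqxx => /(_ isT) hv1.
  have -> : v = 1 by lia.
  exists [:: R11]; split => //; split => //; by move/hf_cons => [[]|/hf_nil].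
have key : forall x s, is_perm n.+1 s -> almost_inc1 s -> letter_op x s = p ->
    (x = R21 \/ x = R22 -> head 0 s != 1) ->
    exists w, [/\ size w = n.+2, valid w & eval_word w = p].
  move=> x s hs has hx hh.
  have [w' [hw1 hw2 hw3]] := IH s isT hs has.
  exists (x :: w'); split.
  - by rewrite /= hw1.
  - case: w' hw1 hw2 hw3 => // y w' _ hw2 hw3.
    case: hw2 => h1 h2 h3; split => //.
    + move/hf_cons => [[ex ey]|]; last by [].
      case: ey => ey; subst y; move: hh; rewrite -hw3 /= rho1.
      by rewrite ex; move/(_ (or_introl erefl)).
    + move/hf_cons => [[ex ey]|]; last by [].
      case: ey => ey; subst y; move: hh; rewrite -hw3 /= rho1.
      by rewrite ex; move/(_ (or_intror erefl)).
  - by rewrite /= hw3.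
have hp' := hp; move/is_permP: hp' => [hu hs hv].
case: p hp ha key hu hs hv => [|a [|c rest]] // hp ha key hu hs hv.
move: (hu); rewrite /= !inE negb_or => /and3P[/andP[hac har] hcr hur].
have ha0 : 0 < a <= n.+2 by apply: hv; rewrite !inE eqxx.
have hc0 : 0 < c <= n.+2 by apply: hv; rewrite !inE eqxx orbT.
have hvr : forall v, v \in rest -> 0 < v <= n.+2.
  by move=> v hvv; apply: hv; rewrite !inE hvv !orbT.
have hsz : (size rest).+1 = n.+1 by move: hs => /= [->].
have hmc : forall v, v \in c :: rest -> 0 < v <= n.+2.
  by move=> v; rewrite inE => /orP[/eqP ->|/hvr].
have hma : forall v, v \in a :: rest -> 0 < v <= n.+2.
  by move=> v; rewrite inE => /orP[/eqP ->|/hvr].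
have uc : uniq (c :: rest) by rewrite /= hcr.
have ua : uniq (a :: rest) by rewrite /= har.
case: (eqVneq a 1) => [ea|na1].
  subst a.
  have n1 : 1 \notin c :: rest by rewrite inE negb_or hac.
  apply: (key R11 (map (dec 1) (c :: rest))).
  - by apply: dec_perm.
  - exact: ai_case1.
  - by rewrite ?op11 ?op21 bmp_dec.
  - by case.
case: (eqVneq c 1) => [ec|nc1].
  subst c.
  have n1 : 1 \notin a :: rest by rewrite inE negb_or eq_sym na1.
  apply: (key R12 (map (dec 1) (a :: rest))).
  - by apply: dec_perm.
  - exact: ai_case2.
  - have := bmp_dec n1.
    by rewrite map_cons ?op12 ?op22 => -[-> ->].
  - by case.
case: (eqVneq a 2) => [ea|na2].
  subst a.
  have n1 : 2 \notin c :: rest by rewrite inE negb_or hac.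
  apply: (key R21 (map (dec 2) (c :: rest))).
  - by apply: dec_perm.
  - exact: ai_case1.
  - by rewrite ?op11 ?op21 bmp_dec.
  - move=> _ /=; move: hac nc1; rewrite /dec; case: ifP; lia.
case: (eqVneq c 2) => [ec|nc2].
  subst c.
  have n1 : 2 \notin a :: rest by rewrite inE negb_or eq_sym na2.
  apply: (key R22 (map (dec 2) (a :: rest))).
  - by apply: dec_perm.
  - exact: ai_case2.
  - have := bmp_dec n1.
    by rewrite map_cons ?op12 ?op22 => -[-> ->].
  - move=> _ /=; move: na1 na2; rewrite /dec; case: ifP; lia.
exfalso; have := ha 2; rewrite /=.
have -> : 2 < a = true by lia.
have -> : 2 < c = true by lia.
by move/(_ isT).
Qed.

Theorem theorem7p5 (n : nat) (pi : seq nat) :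
  1 <= n -> is_perm n pi -> almost_inc1 pi ->
  exists! w : seq letter,
    [/\ size w = n,
        last R22 w = R11,
        ~ has_factor [:: R21; R11] w,
        ~ has_factor [:: R22; R11] w
      & eval_word w = pi].
Proof.
move=> hn hp ha.
have [w [h1 [h2 h3 h4] h5]] := exist_word hn hp ha.
exists w; split; first by split.
move=> w' [g1 g2 g3 g4 g5]; apply: uniq_word.
- by split.
- by split.
- by rewrite h5 g5.
Qed.
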